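(* Let $P=\{S_1,\ldots,S_n\}$ be a homothetic packing of $n$ squares with contact graph $G=([n],E)$. If $K,K'$ are two distinct cliques of $G$ each of size $4$, then $|K\cap K'|\le 2$.
   Context: Let $S=\{(x,y): -1\le x,y\le 1\}$. A homothetic packing of $n$ squares is a set $P=\{S_1,\ldots,S_n\}$ with $S_i=r_iS+p_i$, $r_i>0$, $p_i\in\mathbb{R}^2$, such that distinct squares have disjoint interiors. Its contact graph is $G=([n],E)$ where $\{i,j\}\in E$ iff $i\ne j$ and $S_i\cap S_j\ne\emptyset$. *)

(* Defs.v *)
From HB Require Import structures.
From mathcomp Require Import all_boot all_order all_algebra.
From mathcomp Require Import reals.
Set Implicit Arguments. Unset Strict Implicit. Unset Printing Implicit Defensive.
Import Order.TTheory GRing.Theory Num.Theory.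
Local Open Scope ring_scope.

(* The standard square is
   S = {(x,y) : -1 <= x, y <= 1}; the homothetic copy r S + p (r > 0) is the
   set of points q with |q.x - p.x| <= r and |q.y - p.y| <= r. *)
Definition in_square (R : realType) (r : R) (p q : R * R) : Prop :=
  `|q.1 - p.1| <= r /\ `|q.2 - p.2| <= r.

Definition in_square_interior (R : realType) (r : R) (p q : R * R) : Prop :=
  `|q.1 - p.1| < r /\ `|q.2 - p.2| < r.

Definition homothetic_packing (R : realType) (n : nat)
    (r : 'I_n -> R) (p : 'I_n -> R * R) : Prop :=
  (forall i, 0 < r i) /\
  (forall i j, i != j ->
     ~ (exists q, in_square_interior (r i) (p i) q /\
                  in_square_interior (r j) (p j) q)).

Definition contact_edge (R : realType) (n : nat)
    (r : 'I_n -> R) (p : 'I_n -> R * R) (i j : 'I_n) : Prop :=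
  i != j /\ exists q, in_square (r i) (p i) q /\ in_square (r j) (p j) q.

Definition contact_clique (R : realType) (n : nat)
    (r : 'I_n -> R) (p : 'I_n -> R * R) (K : {set 'I_n}) : Prop :=
  forall i j, i \in K -> j \in K -> i != j -> contact_edge r p i j.

(* Main.v *)
Require Import Defs.
From HB Require Import structures.
From mathcomp Require Import all_boot all_order all_algebra.
From mathcomp Require Import reals ring lra.
Import Order.TTheory GRing.Theory Num.Theory.
Section Aux.
Set Implicit Arguments. Unset Strict Implicit. Unset Printing Implicit Defensive.
Local Open Scope ring_scope.


Definition sep (R : realType) (ri rj : R) (pi pj : R * R) :=
  ri + rj <= `|pi.1 - pj.1| \/ ri + rj <= `|pi.2 - pj.2|.
Definition corner (R : realType) (r : R) (pp q : R * R) (s t : bool) :=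
  pp.1 - q.1 = (if s then r else - r) /\ pp.2 - q.2 = (if t then r else - r).

Lemma insq_lin (R : realType) (r : R) (pp q : R * R) : in_square r pp q ->
  [/\ q.1 - pp.1 <= r, pp.1 - q.1 <= r, q.2 - pp.2 <= r & pp.2 - q.2 <= r].
Proof. by case; rewrite !ler_norml => /andP[? ?] /andP[? ?]; split; lra. Qed.

Lemma sep_lin (R : realType) (ri rj : R) (pi pj : R * R) : sep ri rj pi pj ->
  ri + rj <= pi.1 - pj.1 \/ ri + rj <= pj.1 - pi.1 \/
  ri + rj <= pi.2 - pj.2 \/ ri + rj <= pj.2 - pi.2.
Proof.
case; rewrite ler_normr => /orP[] h.
- by left.
- by right; left; lra.
- by right; right; left.
- by right; right; right; lra.
Qed.



Lemma contact_lin (R : realType) (ri rj : R) (pi pj : R * R) :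
  (exists q, in_square ri pi q /\ in_square rj pj q) ->
  [/\ pi.1 - pj.1 <= ri + rj, pj.1 - pi.1 <= ri + rj,
      pi.2 - pj.2 <= ri + rj & pj.2 - pi.2 <= ri + rj].
Proof.
case=> q [/insq_lin[? ? ? ?] /insq_lin[? ? ? ?]]; split; lra.
Qed.

Lemma lin_insq (R : realType) (r : R) (pp q : R * R) :
  pp.1 - r <= q.1 -> q.1 <= pp.1 + r -> pp.2 - r <= q.2 -> q.2 <= pp.2 + r ->
  in_square r pp q.
Proof. by move=> *; split; rewrite ler_norml; apply/andP; split; lra. Qed.

Lemma helly1 (R : realType) (a1 a2 a3 a4 b1 b2 b3 b4 : R) :
  a1 <= b1 -> a1 <= b2 -> a1 <= b3 -> a1 <= b4 ->
  a2 <= b1 -> a2 <= b2 -> a2 <= b3 -> a2 <= b4 ->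
  a3 <= b1 -> a3 <= b2 -> a3 <= b3 -> a3 <= b4 ->
  a4 <= b1 -> a4 <= b2 -> a4 <= b3 -> a4 <= b4 ->
  exists t, [/\ a1 <= t <= b1, a2 <= t <= b2, a3 <= t <= b3 & a4 <= t <= b4].
Proof.
move=> *; exists (Num.max (Num.max a1 a2) (Num.max a3 a4)).
split; apply/andP; split; rewrite ?le_max ?ge_max ?lexx ?orbT //=; by repeat (apply/andP; split).
Qed.

Lemma interior_pt (R : realType) (xi xj ri rj : R) : 0 < ri -> 0 < rj ->
  `|xi - xj| < ri + rj -> exists t, `|t - xi| < ri /\ `|t - xj| < rj.
Proof.
move=> hi hj hd.
have hs : 0 < ri + rj by lra.
exists ((xi * rj + xj * ri) / (ri + rj)).
have hne : ri + rj != 0 by rewrite gt_eqF.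
set ci := ri / (ri + rj); set cj := rj / (ri + rj).
have ci0 : 0 < ci by rewrite divr_gt0.
have cj0 : 0 < cj by rewrite divr_gt0.
have eci : ci * (ri + rj) = ri by rewrite /ci mulrVK ?unitfE.
have ecj : cj * (ri + rj) = rj by rewrite /cj mulrVK ?unitfE.
have e1 : (xi * rj + xj * ri) / (ri + rj) - xi = (xj - xi) * ci.
  by rewrite /ci; field.
have e2 : (xi * rj + xj * ri) / (ri + rj) - xj = (xi - xj) * cj.
  by rewrite /cj; field.
rewrite e1 e2; clearbody ci cj; rewrite !normrM (gtr0_norm ci0) (gtr0_norm cj0) distrC.
split; nra.
Qed.

Lemma sep_of_pack (R : realType) (ri rj : R) (pi pj : R * R) :
  0 < ri -> 0 < rj ->
  ~ (exists q, in_square_interior ri pi q /\ in_square_interior rj pj q) ->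
  sep ri rj pi pj.
Proof.
move=> hi hj H.
case: (leP (ri + rj) `|pi.1 - pj.1|) => h1; first by left.
case: (leP (ri + rj) `|pi.2 - pj.2|) => h2; first by right.
exfalso; apply: H.
have [t1 [t1i t1j]] := interior_pt hi hj h1.
have [t2 [t2i t2j]] := interior_pt hi hj h2.
by exists (t1, t2); split; split.
Qed.

Ltac splitsep H := case: H => [H|[H|[H|H]]]; try lra.

Lemma status (R : realType) (u r : R) : - r <= u -> u <= r ->
  (u = r \/ u = - r) \/ (- r < u < r).
Proof.
move=> h1 h2; case: (ltrgtP u r) => h3; last by left; left.
- case: (ltrgtP u (- r)) => h4; last by left; right.
  + lra.
  + by right; apply/andP.
- lra.
Qed.

Lemma corner4 (R : realType) (r1 r2 r3 r4 : R) (p1 p2 p3 p4 q : R * R) :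
  0 < r1 -> 0 < r2 -> 0 < r3 -> 0 < r4 ->
  in_square r1 p1 q -> in_square r2 p2 q -> in_square r3 p3 q -> in_square r4 p4 q ->
  sep r1 r2 p1 p2 -> sep r1 r3 p1 p3 -> sep r1 r4 p1 p4 ->
  sep r2 r3 p2 p3 -> sep r2 r4 p2 p4 -> sep r3 r4 p3 p4 ->
  exists s t, corner r1 p1 q s t.
Proof.
move=> h1 h2 h3 h4 /insq_lin[q1 q2 q3 q4] /insq_lin[q5 q6 q7 q8]
  /insq_lin[q9 q10 q11 q12] /insq_lin[q13 q14 q15 q16]
  /sep_lin S12 /sep_lin S13 /sep_lin S14 /sep_lin S23 /sep_lin S24 /sep_lin S34.
have [[Hx|Hx]|/andP[Hx Hx']] : (p1.1 - q.1 = r1 \/ p1.1 - q.1 = - r1) \/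
    (- r1 < p1.1 - q.1 < r1) by apply: status; lra.
- have [[Hy|Hy]|/andP[Hy Hy']] : (p1.2 - q.2 = r1 \/ p1.2 - q.2 = - r1) \/
    (- r1 < p1.2 - q.2 < r1) by apply: status; lra.
  + by exists true, true.
  + by exists true, false.
  + exfalso. splitsep S12; splitsep S13; splitsep S14; splitsep S23; splitsep S24; splitsep S34.
- have [[Hy|Hy]|/andP[Hy Hy']] : (p1.2 - q.2 = r1 \/ p1.2 - q.2 = - r1) \/
    (- r1 < p1.2 - q.2 < r1) by apply: status; lra.
  + by exists false, true.
  + by exists false, false.
  + exfalso. splitsep S12; splitsep S13; splitsep S14; splitsep S23; splitsep S24; splitsep S34.
- exfalso. splitsep S12; splitsep S13; splitsep S14; splitsep S23; splitsep S24; splitsep S34.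
Qed.

Lemma same_quadrant (R : realType) (ri rj : R) (pi pj q : R * R) s t :
  0 < ri -> 0 < rj -> corner ri pi q s t -> corner rj pj q s t ->
  sep ri rj pi pj -> False.
Proof.
move=> hi hj [a1 a2] [b1 b2] /sep_lin S.
by case: s t a1 a2 b1 b2 => [] [] /= *; splitsep S.
Qed.

Lemma q_unique (R : realType) (ri rj : R) (pi pj q q' : R * R) s t :
  corner ri pi q s t -> corner rj pj q (~~ s) (~~ t) ->
  in_square ri pi q' -> in_square rj pj q' -> q' = q.
Proof.
case: q q' => [qa qb] [qa' qb'] [a1 a2] [b1 b2] /insq_lin[? ? ? ?] /insq_lin[? ? ? ?].
by case: s t a1 a2 b1 b2 => [] [] a1 a2 b1 b2; congr pair; simpl in *; lra.
Qed.

Lemma bool3 (u v w : bool * bool) : u != v -> v != w -> u != w ->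
  (v = (~~ u.1, ~~ u.2)) \/ (w = (~~ v.1, ~~ v.2)) \/ (w = (~~ u.1, ~~ u.2)).
Proof. by case: u v w => [[] []] [[] []] [[] []]; auto. Qed.

Lemma bool5 (a b c d e : bool * bool) : a != b -> b != c -> a != c ->
  a != d -> b != d -> c != d -> a != e -> b != e -> c != e -> e = d.
Proof. by case: a b c d e => [[] []] [[] []] [[] []] [[] []] [[] []]. Qed.


Lemma sep_sym (R : realType) (ri rj : R) (pi pj : R * R) :
  sep ri rj pi pj -> sep rj ri pj pi.
Proof. by rewrite /sep addrC (distrC pi.1) (distrC pi.2). Qed.

Definition meet (R : realType) (ri rj : R) (pi pj : R * R) :=
  exists q, in_square ri pi q /\ in_square rj pj q.

Lemma helly4 (R : realType) (r1 r2 r3 r4 : R) (p1 p2 p3 p4 : R * R) :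
  0 < r1 -> 0 < r2 -> 0 < r3 -> 0 < r4 ->
  meet r1 r2 p1 p2 -> meet r1 r3 p1 p3 -> meet r1 r4 p1 p4 ->
  meet r2 r3 p2 p3 -> meet r2 r4 p2 p4 -> meet r3 r4 p3 p4 ->
  exists q, [/\ in_square r1 p1 q, in_square r2 p2 q, in_square r3 p3 q &
             in_square r4 p4 q].
Proof.
move=> ? ? ? ? /contact_lin[? ? ? ?] /contact_lin[? ? ? ?] /contact_lin[? ? ? ?]
  /contact_lin[? ? ? ?] /contact_lin[? ? ? ?] /contact_lin[? ? ? ?].
have [t1 [/andP[? ?] /andP[? ?] /andP[? ?] /andP[? ?]]] :=
  @helly1 R (p1.1 - r1) (p2.1 - r2) (p3.1 - r3) (p4.1 - r4)
    (p1.1 + r1) (p2.1 + r2) (p3.1 + r3) (p4.1 + r4)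
    ltac:(lra) ltac:(lra) ltac:(lra) ltac:(lra) ltac:(lra) ltac:(lra)
    ltac:(lra) ltac:(lra) ltac:(lra) ltac:(lra) ltac:(lra) ltac:(lra)
    ltac:(lra) ltac:(lra) ltac:(lra) ltac:(lra).
have [t2 [/andP[? ?] /andP[? ?] /andP[? ?] /andP[? ?]]] :=
  @helly1 R (p1.2 - r1) (p2.2 - r2) (p3.2 - r3) (p4.2 - r4)
    (p1.2 + r1) (p2.2 + r2) (p3.2 + r3) (p4.2 + r4)
    ltac:(lra) ltac:(lra) ltac:(lra) ltac:(lra) ltac:(lra) ltac:(lra)
    ltac:(lra) ltac:(lra) ltac:(lra) ltac:(lra) ltac:(lra) ltac:(lra)
    ltac:(lra) ltac:(lra) ltac:(lra) ltac:(lra).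
by exists (t1, t2); split; apply: lin_insq.
Qed.

Lemma five (R : realType) (ra rb rc rd re : R) (pa pb pc pd pe : R * R) :
  0 < ra -> 0 < rb -> 0 < rc -> 0 < rd -> 0 < re ->
  meet ra rb pa pb -> meet ra rc pa pc -> meet rb rc pb pc ->
  meet ra rd pa pd -> meet rb rd pb pd -> meet rc rd pc pd ->
  meet ra re pa pe -> meet rb re pb pe -> meet rc re pc pe ->
  sep ra rb pa pb -> sep ra rc pa pc -> sep rb rc pb pc ->
  sep ra rd pa pd -> sep rb rd pb pd -> sep rc rd pc pd ->
  sep ra re pa pe -> sep rb re pb pe -> sep rc re pc pe ->
  sep rd re pd pe -> False.
Proof.
move=> ha hb hc hd he Mab Mac Mbc Mad Mbd Mcd Mae Mbe Mce
  Sab Sac Sbc Sad Sbd Scd Sae Sbe Sce Sde.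
have [q [Qa Qb Qc Qd]] := helly4 ha hb hc hd Mab Mac Mad Mbc Mbd Mcd.
have [q' [Q'a Q'b Q'c Q'e]] := helly4 ha hb hc he Mab Mac Mae Mbc Mbe Mce.
have [sa [ta Ca]] := corner4 ha hb hc hd Qa Qb Qc Qd Sab Sac Sad Sbc Sbd Scd.
have [sb [tb Cb]] := corner4 hb ha hc hd Qb Qa Qc Qd (sep_sym Sab) Sbc Sbd Sac Sad Scd.
have [sc [tc Cc]] := corner4 hc ha hb hd Qc Qa Qb Qd (sep_sym Sac) (sep_sym Sbc)
  Scd Sab Sad Sbd.
have [sd [td Cd]] := corner4 hd ha hb hc Qd Qa Qb Qc (sep_sym Sad) (sep_sym Sbd)
  (sep_sym Scd) Sab Sac Sbc.
have dq : forall ri rj (pi pj : R * R) si ti sj tj, 0 < ri -> 0 < rj ->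
    corner ri pi q si ti -> corner rj pj q sj tj -> sep ri rj pi pj ->
    (si, ti) != (sj, tj).
  move=> ri rj pi pj si ti sj tj hi hj Ci Cj Sij; apply/negP => /eqP [e1 e2].
  by subst; apply: (same_quadrant hi hj Ci Cj Sij).
have eq' : q' = q.
  case: (bool3 (dq _ _ _ _ _ _ _ _ ha hb Ca Cb Sab) (dq _ _ _ _ _ _ _ _ hb hc Cb Cc Sbc)
               (dq _ _ _ _ _ _ _ _ ha hc Ca Cc Sac)) => [|[]] [e1 e2].
  - by rewrite e1 e2 in Cb; apply: (q_unique Ca Cb Q'a Q'b).
  - by rewrite e1 e2 in Cc; apply: (q_unique Cb Cc Q'b Q'c).
  - by rewrite e1 e2 in Cc; apply: (q_unique Ca Cc Q'a Q'c).
subst q'.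
have [se [te Ce]] := corner4 he ha hb hc Q'e Qa Qb Qc (sep_sym Sae) (sep_sym Sbe)
  (sep_sym Sce) Sab Sac Sbc.
have := bool5 (dq _ _ _ _ _ _ _ _ ha hb Ca Cb Sab) (dq _ _ _ _ _ _ _ _ hb hc Cb Cc Sbc)
  (dq _ _ _ _ _ _ _ _ ha hc Ca Cc Sac) (dq _ _ _ _ _ _ _ _ ha hd Ca Cd Sad)
  (dq _ _ _ _ _ _ _ _ hb hd Cb Cd Sbd) (dq _ _ _ _ _ _ _ _ hc hd Cc Cd Scd)
  (dq _ _ _ _ _ _ _ _ ha he Ca Ce Sae) (dq _ _ _ _ _ _ _ _ hb he Cb Ce Sbe)
  (dq _ _ _ _ _ _ _ _ hc he Cc Ce Sce).
case=> e1 e2; subst.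
exact: (same_quadrant hd he Cd Ce Sde).
Qed.
End Aux.

Theorem lemma10 (R : realType) (n : nat) (r : 'I_n -> R) (p : 'I_n -> R * R)
    (K K' : {set 'I_n}) :
  homothetic_packing r p ->
  contact_clique r p K -> contact_clique r p K' ->
  #|K| = 4 -> #|K'| = 4 -> K != K' ->
  #|K :&: K'| <= 2.
Proof.
move=> [rpos pack] CK CK' cardK cardK' neq.
rewrite leqNgt; apply/negP => /card_gt2P [a [b [c [[ha hb hc] [nab nbc nca]]]]].
move: ha hb hc; rewrite !in_setI => /andP[aK aK'] /andP[bK bK'] /andP[cK cK'].
have [d dK dK'] : exists2 d, d \in K & d \notin K'.
  apply/subsetPn; apply: contra neq => sub.
  by rewrite eqEcard sub cardK cardK' leqnn.
have [e eK' eK] : exists2 e, e \in K' & e \notin K.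
  apply/subsetPn; apply: contra neq => sub.
  by rewrite eq_sym eqEcard sub cardK cardK' leqnn.
have nac : a != c by rewrite eq_sym.
have nad : a != d by apply: contraNneq dK' => <-.
have nbd : b != d by apply: contraNneq dK' => <-.
have ncd : c != d by apply: contraNneq dK' => <-.
have nae : a != e by apply: contraNneq eK => <-.
have nbe : b != e by apply: contraNneq eK => <-.
have nce : c != e by apply: contraNneq eK => <-.
have nde : d != e by apply: contraNneq dK' => ->.
have S := fun i j (h : i != j) => sep_of_pack (rpos i) (rpos j) (pack i j h).
have MK := fun i j iK jK h => (CK i j iK jK h).2.
have MK' := fun i j iK jK h => (CK' i j iK jK h).2.
exact: (five (rpos a) (rpos b) (rpos c) (rpos d) (rpos e)
  (MK a b aK bK nab) (MK a c aK cK nac) (MK b c bK cK nbc)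
  (MK a d aK dK nad) (MK b d bK dK nbd) (MK c d cK dK ncd)
  (MK' a e aK' eK' nae) (MK' b e bK' eK' nbe) (MK' c e cK' eK' nce)
  (S _ _ nab) (S _ _ nac) (S _ _ nbc) (S _ _ nad) (S _ _ nbd) (S _ _ ncd)
  (S _ _ nae) (S _ _ nbe) (S _ _ nce) (S _ _ nde)).
Qed.
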